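(* In the setting described in the context, the following hold. (1) Suppose that for a fixed $b_0\in(0,1)$ and some $b_h<b_0$ one has $|J(u)-J(u_h^{(2)})|<b_h|J(u)-J(\tilde u)|$. Then $$I_{eff}:=\frac{|\eta^{(2)}|}{|J(u)-J(\tilde u)|}\in[1-b_0,\,1+b_0].$$ If moreover this holds along a family of such configurations (indexed by $h$) with $b_h\to0$, then $I_{eff}\to1$. (2) Suppose that for a fixed $b_{0,\gamma}\in(0,1)$ and some $b_{h,\gamma}<b_{0,\gamma}$ one has $\gamma<b_{h,\gamma}|J(u)-J(\tilde u)|$. Then $$I_{eff,\gamma}:=\frac{|\eta_h^{(2)}|}{|J(u)-J(\tilde u)|}\in[1-b_{0,\gamma},\,1+b_{0,\gamma}].$$ If moreover this holds along a family of such configurations with $b_{h,\gamma}\to0$, then $I_{eff,\gamma}\to1$.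
   Context: Let $U$ and $V$ be real Banach spaces with dual $V^*$. Let $\mathcal{A}:U\to V^*$ be a (nonlinear) operator that is three times continuously Fréchet differentiable, and let $J:U\to\mathbb{R}$ be three times continuously Fréchet differentiable. Notation: $\mathcal{A}(w)(v)$ is the value of $\mathcal{A}(w)\in V^*$ at $v\in V$. For fixed $v$, $\mathcal{A}'(w)(\varphi,v)$, $\mathcal{A}''(w)(\varphi,\psi,v)$ and $\mathcal{A}'''(w)(\varphi,\psi,\chi,v)$ denote the first, second and third Fréchet derivatives of $w\mapsto\mathcal{A}(w)(v)$ at $w$ in the directions $\varphi,\psi,\chi\in U$. Analogously, $J'(w)(\varphi)$ and $J'''(w)(\varphi,\psi,\chi)$ denote derivatives of $J$. Let $u\in U$ satisfy $\mathcal{A}(u)(v)=0$ for all $v\in V$, and let $z\in V$ satisfy $\mathcal{A}'(u)(\varphi,z)=J'(u)(\varphi)$ for all $\varphi\in U$. Let $U_h^{(2)}\subset U$ and $V_h^{(2)}\subset V$ be finite-dimensional subspaces. Let $u_h^{(2)}\in U_h^{(2)}$ satisfy $\mathcal{A}(u_h^{(2)})(v)=0$ for all $v\in V_h^{(2)}$. Let $z_h^{(2)}\in V_h^{(2)}$ satisfy $\mathcal{A}'(u_h^{(2)})(\varphi,z_h^{(2)})=J'(u_h^{(2)})(\varphi)$ for all $\varphi\in U_h^{(2)}$. Let $\tilde u\in U_h^{(2)}$ and $\tilde z\in V_h^{(2)}$ be arbitrary fixed elements. Define $\rho(\tilde u)(v):=-\mathcal{A}(\tilde u)(v)$ and $\rho^*(\tilde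 u,\tilde z)(\varphi):=J'(\tilde u)(\varphi)-\mathcal{A}'(\tilde u)(\varphi,\tilde z)$. With $e:=u-\tilde u$ and $e^*:=z-\tilde z$, define $$\mathcal{R}^{(3)}:=\frac12\int_0^1\Big[J'''(\tilde u+se)(e,e,e)-\mathcal{A}'''(\tilde u+se)(e,e,e,\tilde z+se^* )-3\mathcal{A}''(\tilde u+se)(e,e,e^* )\Big]s(s-1)\,ds.$$ Let $\mathcal{R}^{(3)(2)}$ be the same expression with $e,e^*,z$ replaced by $e^{(2)}:=u_h^{(2)}-\tilde u$, $e^{(2),*}:=z_h^{(2)}-\tilde z$, $z_h^{(2)}$. Define $$\eta_h^{(2)}:=\tfrac12\rho(\tilde u)(z_h^{(2)}-\tilde z)+\tfrac12\rho^*(\tilde u,\tilde z)(u_h^{(2)}-\tilde u),\qquad \eta^{(2)}:=\eta_h^{(2)}+\rho(\tilde u)(\tilde z)+\mathcal{R}^{(3)(2)},$$ $$\gamma:=|J(u)-J(u_h^{(2)})|+|\mathcal{R}^{(3)}-\mathcal{R}^{(3)(2)}|+|\rho(\tilde u)(\tilde z)|+|\mathcal{R}^{(3)}|.$$ *)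

(* Defs.v *)
From HB Require Import structures.
From mathcomp Require Import all_boot all_order all_algebra.
From mathcomp Require Import all_classical all_reals all_analysis.
Set Implicit Arguments. Unset Strict Implicit. Unset Printing Implicit Defensive.
Import Order.TTheory GRing.Theory Num.Theory.
Import numFieldNormedType.Exports.
Local Open Scope classical_set_scope.
Local Open Scope ring_scope.

Section Defs.
Variable R : realType.

Definition lin_form (X : lmodType R) (f : X -> R) : Prop :=
  forall (a : R) (x y : X), f (a *: x + y) = a * f x + f y.

Definition fin_dim_subspace (X : lmodType R) (S : set X) : Prop :=
  exists (n : nat) (b : 'I_n -> X),
    S = [set x | exists c : 'I_n -> R, x = \sum_(i < n) c i *: b i].

(** J : U -> R is three times continuously Frechet differentiable with
    Frechet derivatives J1 (= J'), J2 (= J''), J3 (= J'''), where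
    J2 w p q is the derivative of w |-> J1 w p in direction q, and
    J3 w p q r the derivative of w |-> J2 w p q in direction r.
    The k-th derivative is a bounded k-linear form; Frechet
    differentiability / continuity are w.r.t. the operator norms. *)
Definition C3_functional (U : normedModType R) (J : U -> R)
  (J1 : U -> U -> R) (J2 : U -> U -> U -> R) (J3 : U -> U -> U -> U -> R) : Prop :=
  (forall w, lin_form (J1 w)) /\
  (forall w q, lin_form (fun p => J2 w p q)) /\ (forall w p, lin_form (J2 w p)) /\
  (forall w q r, lin_form (fun p => J3 w p q r)) /\
  (forall w p r, lin_form (fun q => J3 w p q r)) /\ (forall w p q, lin_form (J3 w p q)) /\
  (forall w, exists C, forall p, `|J1 w p| <= C * `|p|) /\
  (forall w, exists C, forall p q, `|J2 w p q| <= C * `|p| * `|q|) /\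
  (forall w, exists C, forall p q r, `|J3 w p q r| <= C * `|p| * `|q| * `|r|) /\
  (forall w (eps : R), 0 < eps -> exists delta : R, 0 < delta /\
     forall h : U, `|h| < delta -> `|J (w + h) - J w - J1 w h| <= eps * `|h|) /\
  (forall w (eps : R), 0 < eps -> exists delta : R, 0 < delta /\
     forall h : U, `|h| < delta -> forall p,
       `|J1 (w + h) p - J1 w p - J2 w p h| <= eps * `|h| * `|p|) /\
  (forall w (eps : R), 0 < eps -> exists delta : R, 0 < delta /\
     forall h : U, `|h| < delta -> forall p q,
       `|J2 (w + h) p q - J2 w p q - J3 w p q h| <= eps * `|h| * `|p| * `|q|) /\
  (forall w (eps : R), 0 < eps -> exists delta : R, 0 < delta /\
     forall h : U, `|h| < delta -> forall p q r,
       `|J3 (w + h) p q r - J3 w p q r| <= eps * `|p| * `|q| * `|r|).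

(** A : U -> V^* (encoded as A w v = A(w)(v)) is three times continuously
    Frechet differentiable, with A1 w p v = A'(w)(p,v), A2 w p q v = A''(w)(p,q,v),
    A3 w p q r v = A'''(w)(p,q,r,v).  Norms are the operator norms of
    bounded multilinear maps into V^*. *)
Definition C3_operator (U V : normedModType R) (A : U -> V -> R)
  (A1 : U -> U -> V -> R) (A2 : U -> U -> U -> V -> R)
  (A3 : U -> U -> U -> U -> V -> R) : Prop :=
  (forall w, lin_form (A w)) /\ (forall w, exists C, forall v, `|A w v| <= C * `|v|) /\
  (forall w v, lin_form (fun p => A1 w p v)) /\ (forall w p, lin_form (A1 w p)) /\
  (forall w q v, lin_form (fun p => A2 w p q v)) /\
  (forall w p v, lin_form (fun q => A2 w p q v)) /\ (forall w p q, lin_form (A2 w p q)) /\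
  (forall w q r v, lin_form (fun p => A3 w p q r v)) /\
  (forall w p r v, lin_form (fun q => A3 w p q r v)) /\
  (forall w p q v, lin_form (fun r => A3 w p q r v)) /\
  (forall w p q r, lin_form (A3 w p q r)) /\
  (forall w, exists C, forall p v, `|A1 w p v| <= C * `|p| * `|v|) /\
  (forall w, exists C, forall p q v, `|A2 w p q v| <= C * `|p| * `|q| * `|v|) /\
  (forall w, exists C, forall p q r v,
      `|A3 w p q r v| <= C * `|p| * `|q| * `|r| * `|v|) /\
  (forall w (eps : R), 0 < eps -> exists delta : R, 0 < delta /\
     forall h : U, `|h| < delta -> forall v,
       `|A (w + h) v - A w v - A1 w h v| <= eps * `|h| * `|v|) /\
  (forall w (eps : R), 0 < eps -> exists delta : R, 0 < delta /\
     forall h : U, `|h| < delta -> forall p v,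
       `|A1 (w + h) p v - A1 w p v - A2 w p h v| <= eps * `|h| * `|p| * `|v|) /\
  (forall w (eps : R), 0 < eps -> exists delta : R, 0 < delta /\
     forall h : U, `|h| < delta -> forall p q v,
       `|A2 (w + h) p q v - A2 w p q v - A3 w p q h v|
         <= eps * `|h| * `|p| * `|q| * `|v|) /\
  (forall w (eps : R), 0 < eps -> exists delta : R, 0 < delta /\
     forall h : U, `|h| < delta -> forall p q r v,
       `|A3 (w + h) p q r v - A3 w p q r v| <= eps * `|p| * `|q| * `|r| * `|v|).

Variables (U V : normedModType R).

Definition rho (A : U -> V -> R) (ut : U) (v : V) : R := - A ut v.

Definition rho_star (A1 : U -> U -> V -> R) (J1 : U -> U -> R)
  (ut : U) (zt : V) (p : U) : R := J1 ut p - A1 ut p zt.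

Definition remainder3 (A2 : U -> U -> U -> V -> R) (A3 : U -> U -> U -> U -> V -> R)
  (J3 : U -> U -> U -> U -> R) (ut : U) (zt : V) (uu : U) (zz : V) : R :=
  let e := uu - ut in let es := zz - zt in
  2^-1 * \int[lebesgue_measure]_(s in `[0, 1]%classic)
    ((J3 (ut + s *: e) e e e - A3 (ut + s *: e) e e e (zt + s *: es)
      - 3 * A2 (ut + s *: e) e e es) * (s * (s - 1))).

Definition eta_h2 (A : U -> V -> R) (A1 : U -> U -> V -> R) (J1 : U -> U -> R)
  (ut : U) (zt : V) (uh : U) (zh : V) : R :=
  2^-1 * rho A ut (zh - zt) + 2^-1 * rho_star A1 J1 ut zt (uh - ut).

Definition eta2 (A : U -> V -> R) (A1 : U -> U -> V -> R) A2 A3 (J1 : U -> U -> R) J3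
  (ut : U) (zt : V) (uh : U) (zh : V) : R :=
  eta_h2 A A1 J1 ut zt uh zh + rho A ut zt + remainder3 A2 A3 J3 ut zt uh zh.

Definition gamma_est (A : U -> V -> R) A2 A3 (J : U -> R) J3
  (u : U) (z : V) (ut : U) (zt : V) (uh : U) (zh : V) : R :=
  `|J u - J uh| + `|remainder3 A2 A3 J3 ut zt u z - remainder3 A2 A3 J3 ut zt uh zh|
  + `|rho A ut zt| + `|remainder3 A2 A3 J3 ut zt u z|.

(** The discrete configuration: finite-dimensional subspaces Uh, Vh, the
    discrete primal solution uh, discrete adjoint zh, and arbitrary ut in Uh,
    zt in Vh. *)
Definition discrete_config (A : U -> V -> R) (A1 : U -> U -> V -> R) (J1 : U -> U -> R)
  (Uh : set U) (Vh : set V) (uh : U) (zh : V) (ut : U) (zt : V) : Prop :=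
  fin_dim_subspace Uh /\ fin_dim_subspace Vh /\
  Uh uh /\ (forall v, Vh v -> A uh v = 0) /\
  Vh zh /\ (forall p, Uh p -> A1 uh p zh = J1 uh p) /\
  Uh ut /\ Vh zt.

End Defs.

(* Main.v *)
Require Import Defs.
From HB Require Import structures.
From mathcomp Require Import all_boot all_order all_algebra.
From mathcomp Require Import all_classical all_reals all_analysis.
From mathcomp Require Import ring lra.
Import Order.TTheory GRing.Theory Num.Theory.
Import numFieldNormedType.Exports.
Local Open Scope classical_set_scope.
Local Open Scope ring_scope.

Lemma deriv_eps (R : realType) (g : R -> R) (s l : R) :
 (forall eps : R, 0 < eps -> exists delta : R, 0 < delta /\ forall t, `|t| < delta ->
    `|g (s + t) - g s - t * l| <= eps * `|t|) -> is_derive s 1 g l.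
Proof.
move=> H.
have C : (fun h : R => h^-1 *: ((g \o shift s) (h *: 1) - g s)) @ 0^' --> l.
  apply/cvgrPdist_le => eps eps0.
  have [d [d0 Hd]] := H eps eps0.
  rewrite near_withinE; near=> t => tn0.
  have tlt : `|t| < d by near: t; exact: (@nbhs0_lt R R).
  have := Hd t tlt.
  rewrite /= scaler1 [s + t]addrC.
  have nt : 0 < `|t| by rewrite normr_gt0.
  have -> : l - t^-1 *: (g (t + s) - g s) = - t^-1 * (g (t + s) - g s - t * l).
    by rewrite /GRing.scale /=; field.
  move=> h; rewrite (normrM (- t^-1)) normrN normfV.
  by rewrite ler_pdivrMl // (mulrC `|t|).
apply: DeriveDef; first by apply/cvg_ex; exists l.
exact: cvg_lim.
Unshelve. all: by end_near.
Qed.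

Lemma cont_eps (R : realType) (g : R -> R) (s : R) :
 (forall eps : R, 0 < eps -> exists delta : R, 0 < delta /\ forall t, `|t| < delta ->
    `|g (s + t) - g s| <= eps) -> {for s, continuous g}.
Proof.
move=> H; apply/cvgrPdist_le => eps eps0.
have [d [d0 Hd]] := H eps eps0.
near=> x.
have hx : `|s - x| < d.
  by near: x; apply: (@cvgr_dist_lt _ _ _ _ _ id) => //.
have := Hd (x - s); rewrite distrC in hx => /(_ hx).
by rewrite addrCA subrr addr0 distrC.
Unshelve. all: by end_near.
Qed.

Section L.
Variable R : realType.

Lemma lin0 {X : lmodType R} {f : X -> R} : lin_form f -> f 0 = 0.
Proof. move=> H; have := H 1 0 0; rewrite scaler0 addr0 mul1r => h.
by apply: (addrI (f 0)); rewrite addr0 -h. Qed.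
Lemma linZ {X : lmodType R} {f : X -> R} a x : lin_form f -> f (a *: x) = a * f x.
Proof. by move=> H; have := H a x 0; rewrite addr0 (lin0 H) addr0. Qed.
Lemma linD {X : lmodType R} {f : X -> R} x y : lin_form f -> f (x + y) = f x + f y.
Proof. by move=> H; have := H 1 x y; rewrite scale1r mul1r. Qed.

Variables (U V : normedModType R).

Lemma deriv_vec (P : U -> V -> R) (Q : U -> U -> V -> R) (w0 e : U) (v0 es : V) (K s : R) :
  0 <= K ->
  lin_form (P (w0 + s *: e)) ->
  (forall v, lin_form (fun p => Q (w0 + s *: e) p v)) ->
  (forall p, lin_form (Q (w0 + s *: e) p)) ->
  (forall eps : R, 0 < eps -> exists delta : R, 0 < delta /\ forall h : U, `|h| < delta ->
     forall v, `|P (w0 + s *: e + h) v - P (w0 + s *: e) v - Q (w0 + s *: e) h v|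
        <= eps * `|h| * K * `|v|) ->
  is_derive s 1 (fun s => P (w0 + s *: e) (v0 + s *: es))
    (Q (w0 + s *: e) e (v0 + s *: es) + P (w0 + s *: e) es).
Proof.
move=> K0 linP linQ1 linQ2 Hf.
set w := w0 + s *: e in linP linQ1 linQ2 Hf *; set v := v0 + s *: es.
apply: deriv_eps => eps eps0.
set M := `|v| + `|es|; set N := `|Q w e es|.
set A := `|e| * K * M.
have A0 : 0 <= A by rewrite /A /M; apply: mulr_ge0; [apply: mulr_ge0|apply: addr_ge0].
set eps1 := eps / (2 * (A + 1)).
have eps10 : 0 < eps1 by rewrite /eps1 divr_gt0 // mulr_gt0 // ltr_wpDl.
have [d [d0 Hd]] := Hf eps1 eps10.
have e1 : 0 < `|e| + 1 by rewrite ltr_wpDl.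
have N1 : 0 < N + 1 by rewrite /N ltr_wpDl.
exists (Num.min 1 (Num.min (d / (`|e| + 1)) (eps / (2 * (N + 1))))).
split.
  by rewrite !lt_min ltr01 !divr_gt0 // mulr_gt0 // ltr_wpDl.
move=> t; rewrite !lt_min => /and3P[t1 t2 t3].
have ht : `|t *: e| < d.
  rewrite normrZ; apply: (le_lt_trans _ (_ : `|t| * (`|e| + 1) < d)).
    by rewrite ler_wpM2l // lerDl.
  by rewrite -ltr_pdivlMr.
have key := Hd (t *: e) ht (v + t *: es).
have -> : w0 + (s + t) *: e = w + t *: e by rewrite scalerDl addrA.
have -> : v0 + (s + t) *: es = v + t *: es by rewrite scalerDl addrA.
have lQ := linQ2 e.
rewrite -/w -/v; clearbody w v.
have -> : P (w + t *: e) (v + t *: es) - P w v - t * (Q w e v + P w es) =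
   (P (w + t *: e) (v + t *: es) - P w (v + t *: es) - Q w (t *: e) (v + t *: es))
   + t * t * Q w e es.
  rewrite (linD _ _ linP) (linZ _ _ linP) (linZ _ _ (linQ1 _)) (linD _ _ lQ) (linZ _ _ lQ).
  ring.
set X := (X in `|X + _|).
have hv : `|v + t *: es| <= M.
  rewrite /M (le_trans (ler_normD _ _)) // lerD2l normrZ.
  by rewrite ler_piMl // ltW.
rewrite (le_trans (ler_normD _ _)) //.
have b1 : `|X| <= eps1 * `|t| * A.
  apply: (le_trans key); rewrite normrZ /A !mulrA.
  apply: ler_wpM2l => //; apply: mulr_ge0 => //; apply: mulr_ge0 => //; apply: mulr_ge0 => //; exact: ltW.
have b2 : `|t * t * Q w e es| = `|t| * (`|t| * N) by rewrite !normrM mulrA.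
have f1 : eps1 * A <= eps / 2.
  have -> : eps / 2 = eps1 * (A + 1) by rewrite /eps1; field; rewrite gt_eqF // ltr_wpDl.
  by rewrite ler_pM2l // lerDl.
have f2 : `|t| * N <= eps / 2.
  apply: (le_trans (_ : _ <= `|t| * (N + 1))); first by rewrite ler_wpM2l // lerDl.
  by rewrite ltW // -ltr_pdivlMr // -mulrA -invfM.
have g1 : eps1 * `|t| * A <= `|t| * (eps / 2).
  by rewrite mulrAC mulrC ler_wpM2l.
have g2 : `|t| * (`|t| * N) <= `|t| * (eps / 2) by rewrite ler_wpM2l.
rewrite b2; lra.
Qed.
End L.

Section T.
Variable R : realType.

Lemma der_p2 (s : R) : is_derive s 1 (fun s : R => s * (s - 1)) (2 * s - 1).
Proof.
apply: deriv_eps => eps eps0; exists eps; split => // t tl.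
have -> : (s + t) * (s + t - 1) - s * (s - 1) - t * (2 * s - 1) = t * t by ring.
by rewrite normrM ler_wpM2r // ltW.
Qed.

Lemma der_p1 (s : R) : is_derive s 1 (fun s : R => 2 * s - 1) 2.
Proof.
apply: deriv_eps => eps eps0; exists 1; split => // t tl.
have -> : (2 * (s + t) - 1) - (2 * s - 1) - t * 2 = 0 by ring.
by rewrite normr0 mulr_ge0 // ltW.
Qed.

Lemma trap (f0 f1 f2 f3 : R -> R) :
  (forall s : R, is_derive s (1 : R) f0 (f1 s)) -> (forall s : R, is_derive s (1 : R) f1 (f2 s)) ->
  (forall s : R, is_derive s (1 : R) f2 (f3 s)) -> continuous f3 ->
  2^-1 * \int[lebesgue_measure]_(s in `[0, 1]%classic) (f3 s * (s * (s - 1)))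
   = f0 1 - f0 0 - 2^-1 * (f1 0 + f1 1).
Proof.
move=> d0 d1 d2 c3.
pose p2 := fun s : R => s * (s - 1).
pose p1 := fun s : R => 2 * s - 1.
pose F : R -> R := f2 * p2 - f1 * p1 + 2 *: f0.
have dF : forall s : R, is_derive s (1 : R) F (f3 s * (s * (s - 1))).
  move=> s.
  have := is_deriveD (is_deriveB (is_deriveM (d2 s) (der_p2 s)) (is_deriveM (d1 s) (der_p1 s)))
     (is_deriveZ 2 (d0 s)).
  move/is_derive_eq; apply.
  rewrite /p1 /p2 /GRing.scale /=. ring.
have cF : continuous F.
  move=> s; apply: differentiable_continuous; apply/derivable1_diffP.
  by case: (dF s).
have := @continuous_FTC2 R (fun s => f3 s * (s * (s - 1))) F 0 1 ltr01.
rewrite /Rintegral => ->.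
- by rewrite -EFinB /= /F /p1 /p2 !fctE /GRing.scale /=; field.
- apply: continuous_subspaceT => x.
  apply: cvgM; first exact: c3.
  apply: cvgM; first exact: cvg_id.
  apply: cvgB; first exact: cvg_id. exact: cvg_cst.
- split.
  + by move=> x _; case: (dF x).
  + exact: cvg_at_right_filter (cF 0).
  + exact: cvg_at_left_filter (cF 1).
- move=> x _; rewrite derive1E; exact: derive_val.
Qed.
End T.

Arguments lin0 {R X f} _.
Arguments linZ {R X f} a x _.
Arguments linD {R X f} x y _.
Section E.
Variable R : realType.
Variables (U V : normedModType R).

Lemma deriv_scal (P : U -> R) (Q : U -> U -> R) (w0 e : U) (K s : R) :
  0 <= K ->
  lin_form (Q (w0 + s *: e)) ->
  (forall eps : R, 0 < eps -> exists delta : R, 0 < delta /\ forall h : U, `|h| < delta ->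
     `|P (w0 + s *: e + h) - P (w0 + s *: e) - Q (w0 + s *: e) h| <= eps * `|h| * K) ->
  is_derive s (1 : R) (fun s => P (w0 + s *: e)) (Q (w0 + s *: e) e).
Proof.
move=> K0 linQ Hf.
set w := w0 + s *: e in linQ Hf *.
apply: deriv_eps => eps eps0.
set A := `|e| * K.
have A0 : 0 <= A by rewrite /A; apply: mulr_ge0.
set eps1 := eps / (A + 1).
have eps10 : 0 < eps1 by rewrite /eps1 divr_gt0 // ltr_wpDl.
have [d [d0 Hd]] := Hf eps1 eps10.
have e1 : 0 < `|e| + 1 by rewrite ltr_wpDl.
exists (d / (`|e| + 1)); split; first by rewrite divr_gt0.
move=> t t2.
have ht : `|t *: e| < d.
  rewrite normrZ; apply: (le_lt_trans _ (_ : `|t| * (`|e| + 1) < d)).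
    by rewrite ler_wpM2l // lerDl.
  by rewrite -ltr_pdivlMr.
have key := Hd (t *: e) ht.
have -> : w0 + (s + t) *: e = w + t *: e by rewrite scalerDl addrA.
rewrite -(linZ _ _ linQ).
apply: (le_trans key); rewrite normrZ.
have f1 : eps1 * A <= eps.
  have -> : eps = eps1 * (A + 1) by rewrite /eps1; field; rewrite gt_eqF // ltr_wpDl.
  by rewrite ler_pM2l // lerDl.
have -> : eps1 * (`|t| * `|e|) * K = `|t| * (eps1 * A) by rewrite /A; ring.
by rewrite mulrC ler_wpM2r.
Qed.

Lemma cont_scal (P : U -> R) (w0 e : U) (K s : R) :
  0 <= K ->
  (forall eps : R, 0 < eps -> exists delta : R, 0 < delta /\ forall h : U, `|h| < delta ->
     `|P (w0 + s *: e + h) - P (w0 + s *: e)| <= eps * K) ->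
  {for s, continuous (fun x : R => P (w0 + x *: e))}.
Proof.
move=> K0 Hf.
set w := w0 + s *: e in Hf *.
apply: cont_eps => eps eps0.
set eps1 := eps / (K + 1).
have eps10 : 0 < eps1 by rewrite /eps1 divr_gt0 // ltr_wpDl.
have [d [d0 Hd]] := Hf eps1 eps10.
have e1 : 0 < `|e| + 1 by rewrite ltr_wpDl.
exists (d / (`|e| + 1)); split; first by rewrite divr_gt0.
move=> t t2.
have ht : `|t *: e| < d.
  rewrite normrZ; apply: (le_lt_trans _ (_ : `|t| * (`|e| + 1) < d)).
    by rewrite ler_wpM2l // lerDl.
  by rewrite -ltr_pdivlMr.
have key := Hd (t *: e) ht.
have -> : w0 + (s + t) *: e = w + t *: e by rewrite scalerDl addrA.
apply: (le_trans key).
have -> : eps = eps1 * (K + 1) by rewrite /eps1; field; rewrite gt_eqF // ltr_wpDl.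
by rewrite ler_pM2l // lerDl.
Qed.

Lemma cont_vec (P : U -> V -> R) (w0 e : U) (v0 es : V) (K s : R) :
  0 <= K ->
  lin_form (P (w0 + s *: e)) ->
  (forall eps : R, 0 < eps -> exists delta : R, 0 < delta /\ forall h : U, `|h| < delta ->
     forall v, `|P (w0 + s *: e + h) v - P (w0 + s *: e) v| <= eps * K * `|v|) ->
  {for s, continuous (fun x : R => P (w0 + x *: e) (v0 + x *: es))}.
Proof.
move=> K0 linP Hf.
set w := w0 + s *: e in linP Hf *; set v := v0 + s *: es.
apply: cont_eps => eps eps0.
set M := `|v| + `|es|; set N := `|P w es|.
set A := K * M.
have A0 : 0 <= A by rewrite /A /M; apply: mulr_ge0; [|apply: addr_ge0].
set eps1 := eps / (2 * (A + 1)).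
have eps10 : 0 < eps1 by rewrite /eps1 divr_gt0 // mulr_gt0 // ltr_wpDl.
have [d [d0 Hd]] := Hf eps1 eps10.
have e1 : 0 < `|e| + 1 by rewrite ltr_wpDl.
have N1 : 0 < N + 1 by rewrite /N ltr_wpDl.
exists (Num.min 1 (Num.min (d / (`|e| + 1)) (eps / (2 * (N + 1))))).
split.
  by rewrite !lt_min ltr01 !divr_gt0 // mulr_gt0 // ltr_wpDl.
move=> t; rewrite !lt_min => /and3P[t1 t2 t3].
have ht : `|t *: e| < d.
  rewrite normrZ; apply: (le_lt_trans _ (_ : `|t| * (`|e| + 1) < d)).
    by rewrite ler_wpM2l // lerDl.
  by rewrite -ltr_pdivlMr.
have key := Hd (t *: e) ht (v + t *: es).
have -> : w0 + (s + t) *: e = w + t *: e by rewrite scalerDl addrA.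
have -> : v0 + (s + t) *: es = v + t *: es by rewrite scalerDl addrA.
rewrite -/w -/v; clearbody w v.
have -> : P (w + t *: e) (v + t *: es) - P w v =
   (P (w + t *: e) (v + t *: es) - P w (v + t *: es)) + t * P w es.
  rewrite (linD _ _ linP) (linZ _ _ linP). ring.
set X := (X in `|X + _|).
have hv : `|v + t *: es| <= M.
  rewrite /M (le_trans (ler_normD _ _)) // lerD2l normrZ.
  by rewrite ler_piMl // ltW.
rewrite (le_trans (ler_normD _ _)) //.
have b1 : `|X| <= eps1 * A.
  apply: (le_trans key); rewrite /A mulrA.
  by apply: ler_wpM2l => //; apply: mulr_ge0 => //; exact: ltW.
have b2 : `|t * P w es| = `|t| * N by rewrite normrM.
have f1 : eps1 * A <= eps / 2.
  have -> : eps / 2 = eps1 * (A + 1) by rewrite /eps1; field; rewrite gt_eqF // ltr_wpDl.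
  by rewrite ler_pM2l // lerDl.
have f2 : `|t| * N <= eps / 2.
  apply: (le_trans (_ : _ <= `|t| * (N + 1))); first by rewrite ler_wpM2l // lerDl.
  by rewrite ltW // -ltr_pdivlMr // -mulrA -invfM.
rewrite b2; lra.
Qed.

Lemma deriv_vec0 (P : U -> V -> R) (Q : U -> U -> V -> R) (w0 e : U) (v0 : V) (K s : R) :
  0 <= K ->
  lin_form (P (w0 + s *: e)) ->
  (forall v, lin_form (fun p => Q (w0 + s *: e) p v)) ->
  (forall p, lin_form (Q (w0 + s *: e) p)) ->
  (forall eps : R, 0 < eps -> exists delta : R, 0 < delta /\ forall h : U, `|h| < delta ->
     forall v, `|P (w0 + s *: e + h) v - P (w0 + s *: e) v - Q (w0 + s *: e) h v|
        <= eps * `|h| * K * `|v|) ->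
  is_derive s (1 : R) (fun s => P (w0 + s *: e) v0) (Q (w0 + s *: e) e v0).
Proof.
move=> K0 linP linQ1 linQ2 Hf.
have := @deriv_vec R U V P Q w0 e v0 0 K s K0 linP linQ1 linQ2 Hf.
have -> : (fun s0 : R => P (w0 + s0 *: e) (v0 + s0 *: 0)) = (fun s => P (w0 + s *: e) v0).
  by apply: funext => x; rewrite scaler0 addr0.
by rewrite scaler0 addr0 (lin0 linP) addr0.
Qed.

End E.

Arguments lin0 {R X f} _.
Arguments linZ {R X f} a x _.
Arguments linD {R X f} x y _.

Lemma mul4A (R : realType) (x a b c : R) : x * (a * b * c) = x * a * b * c.
Proof. by rewrite !mulrA. Qed.

Lemma rem_eq (R : realType) (U V : normedModType R)
  (A : U -> V -> R) (A1 : U -> U -> V -> R) (A2 : U -> U -> U -> V -> R)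
  (A3 : U -> U -> U -> U -> V -> R)
  (J : U -> R) (J1 : U -> U -> R) (J2 : U -> U -> U -> R) (J3 : U -> U -> U -> U -> R)
  (HA : C3_operator A A1 A2 A3) (HJ : C3_functional J J1 J2 J3)
  (ut uh : U) (zt zh : V) :
  remainder3 A2 A3 J3 ut zt uh zh =
   (J uh - A uh zh) - (J ut - A ut zt)
   - 2^-1 * ((J1 ut (uh - ut) - (A1 ut (uh - ut) zt + A ut (zh - zt)))
            + (J1 uh (uh - ut) - (A1 uh (uh - ut) zh + A uh (zh - zt)))).
Proof.
case: HA => linA [bndA [linA1p [linA1v [linA2p [linA2q [linA2v [linA3p [linA3q [linA3r
  [linA3v [bA1 [bA2 [bA3 [frA [frA1 [frA2 cA3]]]]]]]]]]]]]]]].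
case: HJ => linJ1 [linJ2p [linJ2q [linJ3p [linJ3q [linJ3r [bJ1 [bJ2 [bJ3 [frJ [frJ1
  [frJ2 cJ3]]]]]]]]]]].
rewrite /remainder3 /=.
set e := uh - ut; set es := zh - zt.
have ne : 0 <= `|e| by [].
have ne2 : 0 <= `|e| * `|e| by apply: mulr_ge0.
have ne3 : 0 <= `|e| * `|e| * `|e| by apply: mulr_ge0.
pose f0 := fun s : R => J (ut + s *: e) - A (ut + s *: e) (zt + s *: es).
pose f1 := fun s : R => J1 (ut + s *: e) e
   - (A1 (ut + s *: e) e (zt + s *: es) + A (ut + s *: e) es).
pose f2 := fun s : R => J2 (ut + s *: e) e e
   - ((A2 (ut + s *: e) e e (zt + s *: es) + A1 (ut + s *: e) e es) + A1 (ut + s *: e) e es).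
pose f3 := fun s : R => J3 (ut + s *: e) e e e - A3 (ut + s *: e) e e e (zt + s *: es)
   - 3 * A2 (ut + s *: e) e e es.
have d0 : forall s : R, is_derive s (1 : R) f0 (f1 s).
  move=> s.
  have h1 := @deriv_scal R U J J1 ut e 1 s ler01 (linJ1 _)
    (fun eps eps0 => let: ex_intro d (conj d0 Hd) := frJ (ut + s *: e) eps eps0 in
       ex_intro _ d (conj d0 (fun h hh => eq_ind_r (fun x => _ <= x) (Hd h hh) (mulr1 _)))).
  have h2 := @deriv_vec R U V A A1 ut e zt es 1 s ler01 (linA _) (fun v => linA1p _ v) (linA1v _)
    (fun eps eps0 => let: ex_intro d (conj d0 Hd) := frA (ut + s *: e) eps eps0 in
       ex_intro _ d (conj d0 (fun h hh v => eq_ind_r (fun x => _ <= x * _) (Hd h hh v) (mulr1 _)))).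
  exact: (is_deriveB h1 h2).
have d1 : forall s : R, is_derive s (1 : R) f1 (f2 s).
  move=> s.
  have h1 := @deriv_scal R U (fun w => J1 w e) (fun w h => J2 w e h) ut e `|e| s ne (linJ2q _ _)
    (fun eps eps0 => let: ex_intro d (conj d0 Hd) := frJ1 (ut + s *: e) eps eps0 in
       ex_intro _ d (conj d0 (fun h hh => Hd h hh e))).
  have h2 := @deriv_vec R U V (fun w v => A1 w e v) (fun w h v => A2 w e h v) ut e zt es `|e| s ne
    (linA1v _ _) (fun v => linA2q _ _ v) (fun p => linA2v _ _ p)
    (fun eps eps0 => let: ex_intro d (conj d0 Hd) := frA1 (ut + s *: e) eps eps0 in
       ex_intro _ d (conj d0 (fun h hh v => Hd h hh e v))).
  have h3 := @deriv_vec0 R U V A A1 ut e es 1 s ler01 (linA _) (fun v => linA1p _ v) (linA1v _)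
    (fun eps eps0 => let: ex_intro d (conj d0 Hd) := frA (ut + s *: e) eps eps0 in
       ex_intro _ d (conj d0 (fun h hh v => eq_ind_r (fun x => _ <= x * _) (Hd h hh v) (mulr1 _)))).
  exact: (is_deriveB h1 (is_deriveD h2 h3)).
have d2 : forall s : R, is_derive s (1 : R) f2 (f3 s).
  move=> s.
  have h1 := @deriv_scal R U (fun w => J2 w e e) (fun w h => J3 w e e h) ut e (`|e| * `|e|) s ne2
    (linJ3r _ _ _)
    (fun eps eps0 => let: ex_intro d (conj d0 Hd) := frJ2 (ut + s *: e) eps eps0 in
       ex_intro _ d (conj d0 (fun h hh => eq_ind_r (fun x => _ <= x) (Hd h hh e e) (mulrA _ _ _)))).
  have h2 := @deriv_vec R U V (fun w v => A2 w e e v) (fun w h v => A3 w e e h v) ut e zt es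
    (`|e| * `|e|) s ne2
    (linA2v _ _ _) (fun v => linA3r _ _ _ v) (fun p => linA3v _ _ _ p)
    (fun eps eps0 => let: ex_intro d (conj d0 Hd) := frA2 (ut + s *: e) eps eps0 in
       ex_intro _ d (conj d0 (fun h hh v => eq_ind_r (fun x => _ <= x * _) (Hd h hh e e v) (mulrA _ _ _)))).
  have h3 := @deriv_vec0 R U V (fun w v => A1 w e v) (fun w h v => A2 w e h v) ut e es `|e| s ne
    (linA1v _ _) (fun v => linA2q _ _ v) (fun p => linA2v _ _ p)
    (fun eps eps0 => let: ex_intro d (conj d0 Hd) := frA1 (ut + s *: e) eps eps0 in
       ex_intro _ d (conj d0 (fun h hh v => Hd h hh e v))).
  have -> : f3 s = J3 (ut + s *: e) e e e - ((A3 (ut + s *: e) e e e (zt + s *: es)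
     + A2 (ut + s *: e) e e es) + A2 (ut + s *: e) e e es + A2 (ut + s *: e) e e es).
    by rewrite /f3 /=; ring.
  exact: (is_deriveB h1 (is_deriveD (is_deriveD h2 h3) h3)).
have c3 : continuous f3.
  move=> s.
  have c1 := @cont_scal R U (fun w => J3 w e e e) ut e (`|e| * `|e| * `|e|) s ne3
    (fun eps eps0 => let: ex_intro d (conj d0 Hd) := cJ3 (ut + s *: e) eps eps0 in
       ex_intro _ d (conj d0 (fun h hh => eq_ind_r (fun x => _ <= x) (Hd h hh e e e) (mul4A _ _ _ _ _)))).
  have c2 := @cont_vec R U V (fun w v => A3 w e e e v) ut e zt es (`|e| * `|e| * `|e|) s ne3
    (linA3v _ _ _ _)
    (fun eps eps0 => let: ex_intro d (conj d0 Hd) := cA3 (ut + s *: e) eps eps0 in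
       ex_intro _ d (conj d0 (fun h hh v => eq_ind_r (fun x => _ <= x * _) (Hd h hh e e e v) (mul4A _ _ _ _ _)))).
  have h3 := @deriv_vec0 R U V (fun w v => A2 w e e v) (fun w h v => A3 w e e h v) ut e es
    (`|e| * `|e|) s ne2
    (linA2v _ _ _) (fun v => linA3r _ _ _ v) (fun p => linA3v _ _ _ p)
    (fun eps eps0 => let: ex_intro d (conj d0 Hd) := frA2 (ut + s *: e) eps eps0 in
       ex_intro _ d (conj d0 (fun h hh v => eq_ind_r (fun x => _ <= x * _) (Hd h hh e e v) (mulrA _ _ _)))).
  have c4 : {for s, continuous (fun x : R => A2 (ut + x *: e) e e es)}.
    apply: differentiable_continuous; apply/derivable1_diffP.
    by case: h3.
  apply: cvgB; first exact: cvgB.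
  apply: cvgM; first exact: cvg_cst.
  exact: c4.
have := @trap R f0 f1 f2 f3 d0 d1 d2 c3.
rewrite /f3 => ->.
have E1 : ut + e = uh by rewrite /e addrC subrK.
have E2 : zt + es = zh by rewrite /es addrC subrK.
by rewrite /f0 /f1 !scale0r !scale1r !addr0 E1 E2.
Qed.

Arguments rem_eq {R U V A A1 A2 A3 J J1 J2 J3} HA HJ ut uh zt zh.

Lemma subspace_sub (R : realType) (X : lmodType R) (S : set X) x y :
  fin_dim_subspace S -> S x -> S y -> S (x - y).
Proof.
move=> [n [b ->]] [cx ->] [cy ->]; exists (fun i => cx i - cy i).
by rewrite -sumrB; apply: eq_bigr => i _; rewrite scalerBl.
Qed.
Arguments subspace_sub {R X S x y}.

Lemma eta2_eq (R : realType) (U V : normedModType R)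
  (A : U -> V -> R) (A1 : U -> U -> V -> R) (A2 : U -> U -> U -> V -> R)
  (A3 : U -> U -> U -> U -> V -> R)
  (J : U -> R) (J1 : U -> U -> R) (J2 : U -> U -> U -> R) (J3 : U -> U -> U -> U -> R)
  (HA : C3_operator A A1 A2 A3) (HJ : C3_functional J J1 J2 J3)
  Uh Vh (uh : U) (zh : V) (ut : U) (zt : V) :
  discrete_config A A1 J1 Uh Vh uh zh ut zt ->
  eta2 A A1 A2 A3 J1 J3 ut zt uh zh = J uh - J ut.
Proof.
move=> [sU [sV [Uuh [Auh [Vzh [A1uh [Uut Vzt]]]]]]].
rewrite /eta2 /eta_h2 /rho /rho_star (rem_eq HA HJ).
rewrite (Auh _ Vzh) (Auh _ (subspace_sub sV Vzh Vzt)) (A1uh _ (subspace_sub sU Uuh Uut)).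
ring.
Qed.
Arguments eta2_eq {R U V A A1 A2 A3 J J1 J2 J3} HA HJ {Uh Vh uh zh ut zt}.

Lemma ratio_abs (R : realType) (a c bh : R) :
  `|c - a| <= bh * `|c| -> 0 < `|c| -> `| `|a| / `|c| - 1| <= bh.
Proof.
move=> H c0.
have -> : `|a| / `|c| - 1 = (`|a| - `|c|) / `|c| by field; rewrite gt_eqF.
rewrite normrM normfV normr_id ler_pdivrMr //.
apply: le_trans H; rewrite distrC; exact: ler_dist_dist.
Qed.

Lemma cpos (R : realType) (x c bh : R) : `|x| < bh * `|c| -> 0 < `|c|.
Proof.
move=> H; rewrite lt_def normr_ge0 andbT; apply/eqP => h.
by move: H; rewrite h mulr0 ltNge normr_ge0.
Qed.

Lemma ratio_int (R : realType) (x b0 bh : R) : `|x - 1| <= bh -> bh < b0 ->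
  1 - b0 <= x <= 1 + b0.
Proof.
move=> H hb; move: H; rewrite ler_distl => /andP[h1 h2].
by apply/andP; split; lra.
Qed.

Lemma tri4 (R : realType) (x1 x2 x3 x4 : R) :
  `|x1 - x2 + x3 + x4| <= `|x1| + `|x2| + `|x3| + `|x4|.
Proof.
apply: (le_trans (ler_normD _ _)); rewrite lerD2r.
apply: (le_trans (ler_normD _ _)); rewrite lerD2r.
by apply: (le_trans (ler_normD _ _)); rewrite normrN.
Qed.

Lemma seq_lim (R : realType) (I bh : nat -> R) :
  (forall n, `|I n - 1| <= bh n) -> bh @ \oo --> (0 : R) -> I @ \oo --> (1 : R).
Proof.
move=> H Hb; apply/cvgrPdist_le => eps eps0.
move/cvgrPdist_lt : Hb => /(_ eps eps0); apply: filterS => n hn.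
rewrite distrC; apply: (le_trans (H n)); apply: ltW; apply: le_lt_trans hn.
by rewrite sub0r normrN ler_norm.
Qed.

Theorem mainTheorem3 (R : realType) (U V : completeNormedModType R)
  (A : U -> V -> R) (A1 : U -> U -> V -> R) (A2 : U -> U -> U -> V -> R)
  (A3 : U -> U -> U -> U -> V -> R)
  (J : U -> R) (J1 : U -> U -> R) (J2 : U -> U -> U -> R) (J3 : U -> U -> U -> U -> R)
  (HA : C3_operator A A1 A2 A3) (HJ : C3_functional J J1 J2 J3)
  (u : U) (z : V)
  (Hu : forall v : V, A u v = 0)
  (Hz : forall p : U, A1 u p z = J1 u p) :
  (* (1) single configuration *)
  (forall (Uh : set U) (Vh : set V) (uh : U) (zh : V) (ut : U) (zt : V) (b0 bh : R),
     discrete_config A A1 J1 Uh Vh uh zh ut zt ->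
     0 < b0 < 1 -> bh < b0 ->
     `|J u - J uh| < bh * `|J u - J ut| ->
     let Ieff := `|eta2 A A1 A2 A3 J1 J3 ut zt uh zh| / `|J u - J ut| in
     1 - b0 <= Ieff <= 1 + b0) /\
  (* (1) family of configurations with b_h -> 0 *)
  (forall (Uh : nat -> set U) (Vh : nat -> set V) (uh : nat -> U) (zh : nat -> V)
          (ut : nat -> U) (zt : nat -> V) (b0 : R) (bh : nat -> R),
     0 < b0 < 1 ->
     (forall n, discrete_config A A1 J1 (Uh n) (Vh n) (uh n) (zh n) (ut n) (zt n)) ->
     (forall n, bh n < b0) ->
     (forall n, `|J u - J (uh n)| < bh n * `|J u - J (ut n)|) ->
     bh @ \oo --> (0 : R) ->
     (fun n => `|eta2 A A1 A2 A3 J1 J3 (ut n) (zt n) (uh n) (zh n)| / `|J u - J (ut n)|)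
       @ \oo --> (1 : R)) /\
  (* (2) single configuration *)
  (forall (Uh : set U) (Vh : set V) (uh : U) (zh : V) (ut : U) (zt : V) (b0g bhg : R),
     discrete_config A A1 J1 Uh Vh uh zh ut zt ->
     0 < b0g < 1 -> bhg < b0g ->
     gamma_est A A2 A3 J J3 u z ut zt uh zh < bhg * `|J u - J ut| ->
     let Ieffg := `|eta_h2 A A1 J1 ut zt uh zh| / `|J u - J ut| in
     1 - b0g <= Ieffg <= 1 + b0g) /\
  (* (2) family of configurations with b_{h,gamma} -> 0 *)
  (forall (Uh : nat -> set U) (Vh : nat -> set V) (uh : nat -> U) (zh : nat -> V)
          (ut : nat -> U) (zt : nat -> V) (b0g : R) (bhg : nat -> R),
     0 < b0g < 1 ->
     (forall n, discrete_config A A1 J1 (Uh n) (Vh n) (uh n) (zh n) (ut n) (zt n)) ->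
     (forall n, bhg n < b0g) ->
     (forall n, gamma_est A A2 A3 J J3 u z (ut n) (zt n) (uh n) (zh n)
                  < bhg n * `|J u - J (ut n)|) ->
     bhg @ \oo --> (0 : R) ->
     (fun n => `|eta_h2 A A1 J1 (ut n) (zt n) (uh n) (zh n)| / `|J u - J (ut n)|)
       @ \oo --> (1 : R)).
Proof.
have key1 : forall Uh Vh uh zh ut zt (bh : R),
    discrete_config A A1 J1 Uh Vh uh zh ut zt ->
    `|J u - J uh| < bh * `|J u - J ut| ->
    `| `|eta2 A A1 A2 A3 J1 J3 ut zt uh zh| / `|J u - J ut| - 1| <= bh.
  move=> Uh Vh uh zh ut zt bh Hc H.
  apply: ratio_abs; last exact: cpos H.
  rewrite (eta2_eq HA HJ Hc) ltW //.
  by rewrite (_ : J u - J ut - (J uh - J ut) = J u - J uh) //; ring.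
have key2 : forall Uh Vh uh zh ut zt (bh : R),
    discrete_config A A1 J1 Uh Vh uh zh ut zt ->
    gamma_est A A2 A3 J J3 u z ut zt uh zh < bh * `|J u - J ut| ->
    `| `|eta_h2 A A1 J1 ut zt uh zh| / `|J u - J ut| - 1| <= bh.
  move=> Uh Vh uh zh ut zt bh Hc H.
  have cp : 0 < `|J u - J ut|.
    apply: (@cpos R (gamma_est A A2 A3 J J3 u z ut zt uh zh) _ bh).
    by rewrite ger0_norm // /gamma_est !addr_ge0.
  apply: ratio_abs cp; apply: ltW; apply: le_lt_trans H.
  have E := eta2_eq HA HJ Hc.
  rewrite /eta2 in E.
  have -> : J u - J ut - eta_h2 A A1 J1 ut zt uh zh =
     (J u - J uh) - (remainder3 A2 A3 J3 ut zt u z - remainder3 A2 A3 J3 ut zt uh zh)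
     + rho A ut zt + remainder3 A2 A3 J3 ut zt u z.
    have -> : J ut = J uh - (eta_h2 A A1 J1 ut zt uh zh + rho A ut zt
        + remainder3 A2 A3 J3 ut zt uh zh) by rewrite E; ring.
    ring.
  exact: tri4.
split; [|split; [|split]].
- move=> Uh Vh uh zh ut zt b0 bh Hc _ hb H /=.
  exact: ratio_int (key1 _ _ _ _ _ _ _ Hc H) hb.
- move=> Uh Vh uh zh ut zt b0 bh _ Hc _ H Hb.
  apply: (@seq_lim R _ bh _ Hb) => n; exact: key1 (Hc n) (H n).
- move=> Uh Vh uh zh ut zt b0 bh Hc _ hb H /=.
  exact: ratio_int (key2 _ _ _ _ _ _ _ Hc H) hb.
- move=> Uh Vh uh zh ut zt b0 bh _ Hc _ H Hb.
  apply: (@seq_lim R _ bh _ Hb) => n; exact: key2 (Hc n) (H n).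
Qed.
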